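(* For two candidates, using Weighted Majority Rule 5 (defined in the context), the selected candidate $W\in\{P,Q\}$ always satisfies $SC(W)\le\sqrt2\min\{SC(P),SC(Q)\}$, i.e., the distortion is at most $\sqrt2$; by the lower bound for exact strengths this is the best possible bound.
   Context: Voters $N$ and candidates $P,Q$ are points of an arbitrary metric space $(X,d)$; $SC(Y)=\sum_{i\in N}d(i,Y)$. $A$ is the set of voters preferring $P$ ($d(i,P)\le d(i,Q)$), with exact strengths $\alpha_i=d(i,Q)/d(i,P)$; $B$ the set preferring $Q$, with strengths $\beta_j=d(j,P)/d(j,Q)$. Define $w(x)=\frac{\sqrt2x-1}{x+1}$ if $x>\sqrt2$ and $w(x)=x-1$ if $1\le x\le\sqrt2$. Weighted Majority Rule 5: each $i\in A$ gets weight $w(\alpha_i)$, each $j\in B$ gets weight $w(\beta_j)$; select $P$ if $\sum_{i\in A}w(\alpha_i)\ge\sum_{j\in B}w(\beta_j)$, otherwise $Q$. *)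

(* Defs.v *)
From Stdlib Require Import Reals Lra List.
Open Scope R_scope.

Definition is_metric {X : Type} (d : X -> X -> R) : Prop :=
  (forall x y, 0 <= d x y) /\
  (forall x y, d x y = 0 <-> x = y) /\
  (forall x y, d x y = d y x) /\
  (forall x y z, d x z <= d x y + d y z).

(* Social cost SC(Y) = sum_{i in N} d(i,Y); voters N given as a finite list
   (multiset) of points. *)
Definition SC {X : Type} (d : X -> X -> R) (N : list X) (Y : X) : R :=
  fold_right (fun i acc => d i Y + acc) 0 N.

Definition w5 (x : R) : R :=
  if Rlt_dec (sqrt 2) x then (sqrt 2 * x - 1) / (x + 1) else x - 1.

(* Weight of a voter whose distance to its preferred candidate is a and to the
   other candidate is b (so the exact strength is b/a).  Convention when a = 0:
   the strength is +infinity and the weight is lim_{x->oo} w5 x = sqrt 2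
   (if b > 0); if a = b = 0 then both candidates coincide and the weight is
   w5 1 = 0 (strength 1). *)
Definition voter_weight (a b : R) : R :=
  if Req_EM_T a 0 then (if Req_EM_T b 0 then 0 else sqrt 2) else w5 (b / a).

Definition scoreP {X : Type} (d : X -> X -> R) (N : list X) (P Q : X) : R :=
  fold_right (fun i acc =>
    (if Rle_dec (d i P) (d i Q) then voter_weight (d i P) (d i Q) else 0) + acc) 0 N.

Definition scoreQ {X : Type} (d : X -> X -> R) (N : list X) (P Q : X) : R :=
  fold_right (fun i acc =>
    (if Rle_dec (d i P) (d i Q) then 0 else voter_weight (d i Q) (d i P)) + acc) 0 N.

Definition WMR5 {X : Type} (d : X -> X -> R) (N : list X) (P Q : X) : X :=
  if Rle_dec (scoreQ d N P Q) (scoreP d N P Q) then P else Q.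

(* Main.v *)
Require Import Defs.
From Stdlib Require Import Reals Lra Psatz List.
Open Scope R_scope.

Lemma s2 : sqrt 2 * sqrt 2 = 2. Proof. apply sqrt_sqrt; lra. Qed.
Lemma s_bounds : 1 < sqrt 2 < 3/2.
Proof. pose proof s2. pose proof (sqrt_pos 2). split; nra. Qed.

Lemma w5_cases (x : R) : 1 <= x ->
  (sqrt 2 < x /\ w5 x * (x + 1) = sqrt 2 * x - 1) \/ (x <= sqrt 2 /\ w5 x = x - 1).
Proof.
  intro Hx. unfold w5. destruct (Rlt_dec (sqrt 2) x) as [h|h].
  - left. split; auto. field. lra.
  - right. split; auto; lra.
Qed.

Lemma L1 a b D : 0 <= a -> a <= b -> 0 <= D -> D <= a + b ->
  a - sqrt 2 * b + D * voter_weight a b <= 0.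
Proof.
  intros Ha Hab HD HDab. pose proof s2. pose proof s_bounds.
  unfold voter_weight. destruct (Req_EM_T a 0) as [Ha0|Ha0].
  - destruct (Req_EM_T b 0); subst; nra.
  - assert (Hap : 0 < a) by lra.
    set (x := b / a). assert (Hb : b = x * a) by (unfold x; field; lra).
    assert (Hx : 1 <= x) by (destruct (Rle_dec 1 x); [auto| nra]).
    destruct (w5_cases x Hx) as [[h1 h2]|[h1 h2]].
    + set (W := w5 x) in *. assert (0 <= W) by nra.
      assert (D * W <= (a+b) * W) by nra.
      rewrite Hb in *. nra.
    + rewrite h2. rewrite Hb in *.
      assert (D * (x-1) <= (a + x*a)*(x-1)) by nra. nra.
Qed.

Lemma L2 a b D : 0 <= a -> a <= b -> 0 <= D -> b <= a + D ->
  b - sqrt 2 * a <= D * voter_weight a b.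
Proof.
  intros Ha Hab HD HDab. pose proof s2. pose proof s_bounds.
  unfold voter_weight. destruct (Req_EM_T a 0) as [Ha0|Ha0].
  - destruct (Req_EM_T b 0); subst; nra.
  - assert (Hap : 0 < a) by lra.
    set (x := b / a). assert (Hb : b = x * a) by (unfold x; field; lra).
    assert (Hx : 1 <= x) by (destruct (Rle_dec 1 x); [auto| nra]).
    destruct (w5_cases x Hx) as [[h1 h2]|[h1 h2]].
    + set (W := w5 x) in *. assert (0 <= W) by nra.
      rewrite Hb in *.
      assert (Hsq : (x - sqrt 2) * (x + 1) <= (sqrt 2 * x - 1) * (x - 1)).
      { assert (0 <= (sqrt 2 - 1) * (x - (sqrt 2 + 1))^2) by (apply Rmult_le_pos; [lra|apply pow2_ge_0]). nra. }
      assert (a * (x - 1) * W <= D * W) by nra.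
      assert ((x * a - sqrt 2 * a) * (x + 1) <= D * W * (x+1)) by nra.
      nra.
    + rewrite h2. rewrite Hb in *. nra.
Qed.

Lemma SC_nonneg {X} (d : X -> X -> R) N Y : is_metric d -> 0 <= SC d N Y.
Proof. intros [Hp _]. induction N; simpl; [lra|]. pose proof (Hp a Y). lra. Qed.

Lemma sumP {X} (d : X -> X -> R) N P Q : is_metric d ->
  SC d N P - sqrt 2 * SC d N Q <= d P Q * (scoreQ d N P Q - scoreP d N P Q).
Proof.
  intros Hm. pose proof Hm as [Hp [_ [Hs Ht]]].
  induction N as [|i N IH]; simpl; [lra|].
  pose proof (Hp i P). pose proof (Hp i Q). pose proof (Hp P Q).
  pose proof (Ht i P Q). pose proof (Ht P i Q). pose proof (Ht i Q P). pose proof (Hs P i). pose proof (Hs Q P).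
  destruct (Rle_dec (d i P) (d i Q)).
  - pose proof (L1 (d i P) (d i Q) (d P Q)). nra.
  - pose proof (L2 (d i Q) (d i P) (d P Q)). nra.
Qed.

Lemma sumQ {X} (d : X -> X -> R) N P Q : is_metric d ->
  SC d N Q - sqrt 2 * SC d N P <= d P Q * (scoreP d N P Q - scoreQ d N P Q).
Proof.
  intros Hm. pose proof Hm as [Hp [_ [Hs Ht]]].
  induction N as [|i N IH]; simpl; [lra|].
  pose proof (Hp i P). pose proof (Hp i Q). pose proof (Hp P Q).
  pose proof (Ht i P Q). pose proof (Ht P i Q). pose proof (Ht i Q P). pose proof (Hs P i). pose proof (Hs Q P).
  pose proof (Ht Q i P). pose proof (Hs Q i).
  destruct (Rle_dec (d i P) (d i Q)).
  - pose proof (L2 (d i P) (d i Q) (d P Q)). nra.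
  - pose proof (L1 (d i Q) (d i P) (d P Q)). nra.
Qed.

Theorem mainTheorem12 (X : Type) (d : X -> X -> R) (N : list X) (P Q : X) :
  is_metric d ->
  SC d N (WMR5 d N P Q) <= sqrt 2 * Rmin (SC d N P) (SC d N Q).
Proof.
  intros Hm. pose proof (SC_nonneg d N P Hm). pose proof (SC_nonneg d N Q Hm).
  pose proof (sumP d N P Q Hm). pose proof (sumQ d N P Q Hm).
  pose proof s_bounds. pose proof (proj1 Hm P Q).
  unfold WMR5; destruct (Rle_dec (scoreQ d N P Q) (scoreP d N P Q));
  unfold Rmin; destruct (Rle_dec (SC d N P) (SC d N Q)); nra.
Qed.
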